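(* Let $\mathbf{X}=[\mathbf{x}_1,\dots,\mathbf{x}_T]\in\mathbb{R}^{N\times T}$ be a dataset and $\boldsymbol{\Pi}\in\mathbb{R}^{N\times N}$ a permutation matrix, and set $\bar{\mathbf{X}}=\boldsymbol{\Pi}\mathbf{X}$. Let $\Phi$ denote the covariance scattering transform (CST) built from $\mathbf{X}$ and $\bar\Phi$ the CST built from $\bar{\mathbf{X}}$, both with the same wavelet functions $h_0,\dots,h_{J-1}$, the same number of layers $L$, the same nonlinearity $\rho$, the same choice of operator type and the same map $U$ (see context). Then for every signal $\mathbf{x}\in\mathbb{R}^N$: (i) if $U:\mathbb{R}^N\to\mathbb{R}^N$ is permutation equivariant, i.e. $U(\boldsymbol{\Pi}\mathbf{y})=\boldsymbol{\Pi}U(\mathbf{y})$ for all $\mathbf{y}$ and all permutation matrices $\boldsymbol{\Pi}$ (e.g. the identity), then $\bar\Phi(\boldsymbol{\Pi}\mathbf{x})=\operatorname{Perm}(\Phi(\mathbf{x}),\boldsymbol{\Pi})$; (ii) if $U$ is permutation invariant, i.e. $U(\boldsymbol{\Pi}\mathbf{y})=U(\mathbf{y})$ for all $\mathbf{y}$ and all permutation matrices (e.g. the average $U(\mathbf{y})=\frac1N\mathbf{1}^\top\mathbf{y}$), then $\bar\Phi(\boldsymbol{\Pi}\mathbf{x})=\Phi(\mathbf{x})$.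
   Context: For a dataset $\mathbf{X}=[\mathbf{x}_1,\dots,\mathbf{x}_T]$, the sample mean is $\hat{\boldsymbol\mu}=\frac1T\sum_t\mathbf{x}_t$ and the sample covariance is $\hat{\mathbf{C}}=\frac1T\sum_{t=1}^T(\mathbf{x}_t-\hat{\boldsymbol\mu})(\mathbf{x}_t-\hat{\boldsymbol\mu})^\top$, with largest eigenvalue $\hat w_1>0$. Fix $\gamma>0$. The covariance wavelet operator is either $\hat{\mathbf{T}}=\gamma\hat{\mathbf{C}}/\hat w_1$ or $\hat{\mathbf{T}}=\gamma(\mathbf{I}-\hat{\mathbf{C}}/\hat w_1)$ (the same choice is made for both datasets). For a symmetric matrix $\mathbf{T}=\mathbf{V}\boldsymbol\Lambda\mathbf{V}^\top$ with eigenvalues $\lambda_1,\dots,\lambda_N$ and a fixed function $h:\mathbb{R}\to\mathbb{R}$, the covariance wavelet is $\mathbf{H}(\mathbf{T})=\mathbf{V}\operatorname{diag}(h(\lambda_1),\dots,h(\lambda_N))\mathbf{V}^\top$. Given fixed wavelet functions $h_0,\dots,h_{J-1}$ (not depending on the data), write $\mathbf{H}_j=\mathbf{H}_j(\hat{\mathbf{T}})$. With $\rho:\mathbb{R}\to\mathbb{R}$ applied entrywise, the scattering features of a signal $\mathbf{x}$ are defined recursively by $\mathbf{x}_{()}=\mathbf{x}$ and $\mathbf{x}_{(j_\ell,\dots,j_1)}=\rho(\mathbf{H}_{j_\ell}\mathbf{x}_{(j_{\ell-1},\dots,j_1)})$ for $j_i\in\{0,\dots,J-1\}$, i.e. $\mathbf{x}_{(j_\ell,\dots,j_1)}=\rho(\mathbf{H}_{j_\ell}\rho(\mathbf{H}_{j_{\ell-1}}\cdots\rho(\mathbf{H}_{j_1}\mathbf{x})))$.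 The CST $\Phi(\mathbf{x})$ is the concatenation (in a fixed order of index tuples) of $U\mathbf{x}_{(j_\ell,\dots,j_1)}$ over all layers $\ell=0,\dots,L-1$ and all tuples $(j_\ell,\dots,j_1)\in\{0,\dots,J-1\}^\ell$. When $U$ maps $\mathbb{R}^N$ to $\mathbb{R}^N$, the CST permutation operator is $\operatorname{Perm}(\Phi(\mathbf{x}),\boldsymbol\Pi)=[\boldsymbol\Pi U\mathbf{x}\,\|\,\boldsymbol\Pi U\mathbf{x}_{(0)}\,\|\cdots]$, i.e. each concatenated block $U\mathbf{x}_{(j_\ell,\dots,j_1)}$ is replaced by $\boldsymbol\Pi U\mathbf{x}_{(j_\ell,\dots,j_1)}$. *)

(* Defs.v *)
From HB Require Import structures.
From mathcomp Require Import all_boot all_order all_algebra all_fingroup.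
From mathcomp Require Import reals.
From Stdlib Require Import ClassicalEpsilon.
Set Implicit Arguments. Unset Strict Implicit. Unset Printing Implicit Defensive.
Import Order.TTheory GRing.Theory Num.Theory.
Local Open Scope ring_scope.

Definition pick_or (A : Type) (d : A) (P : A -> Prop) : A :=
  match excluded_middle_informative (exists x, P x) with
  | left h => proj1_sig (constructive_indefinite_description P h)
  | right _ => d
  end.

Section Defs.
Variable R : realType.

Definition is_spec_dec n (A V : 'M[R]_n) (d : 'rV[R]_n) : Prop :=
  V^T *m V = 1%:M /\ A = V *m diag_mx d *m V^T.

Definition cov_wavelet n (h : R -> R) (A : 'M[R]_n) : 'M[R]_n :=
  let p := pick_or (0, 0) (fun p : 'M[R]_n * 'rV[R]_n => is_spec_dec A p.1 p.2) in
  p.1 *m diag_mx (map_mx h p.2) *m p.1^T.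

(* Largest eigenvalue (default 0 if there is none). *)
Definition largest_eig n (A : 'M[R]_n) : R :=
  pick_or 0 (fun w => eigenvalue A w /\ forall a, eigenvalue A a -> a <= w).

Definition sample_mean N T (X : 'M[R]_(N, T)) : 'cV[R]_N :=
  (T%:R)^-1 *: (X *m const_mx 1).

Definition sample_cov N T (X : 'M[R]_(N, T)) : 'M[R]_N :=
  let Xc := X - sample_mean X *m const_mx 1 in
  (T%:R)^-1 *: (Xc *m Xc^T).

Inductive op_type := OpCov | OpIdMinusCov.

Definition cov_op N T (gamma : R) (ot : op_type) (X : 'M[R]_(N, T)) : 'M[R]_N :=
  let C := sample_cov X in
  let w1 := largest_eig C in
  match ot with
  | OpCov => gamma *: (w1^-1 *: C)
  | OpIdMinusCov => gamma *: (1%:M - w1^-1 *: C)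
  end.

(* Scattering feature for an index path [:: j_1; ...; j_l]:
   x_(j_l,...,j_1) = rho(H_{j_l} ... rho(H_{j_1} x)). *)
Fixpoint scat_feat N J (H : 'I_J -> 'M[R]_N) (rho : R -> R)
    (p : seq 'I_J) (x : 'cV[R]_N) : 'cV[R]_N :=
  match p with
  | [::] => x
  | j :: p' => scat_feat H rho p' (map_mx rho (H j *m x))
  end.

Fixpoint all_paths J (l : nat) : seq (seq 'I_J) :=
  match l with
  | 0 => [:: [::]]
  | l'.+1 => [seq j :: p | j <- enum 'I_J, p <- all_paths J l']
  end.

(* The CST Phi(x): the concatenation, over layers l = 0..L-1 and all tuples
   of length l (fixed order), of the blocks U x_(j_l,...,j_1); represented as
   the list of its blocks. *)
Definition cst N T M J (X : 'M[R]_(N, T)) (gamma : R) (ot : op_type)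
    (h : 'I_J -> R -> R) (L : nat) (rho : R -> R)
    (U : 'cV[R]_N -> 'cV[R]_M) (x : 'cV[R]_N) : seq 'cV[R]_M :=
  let Th := cov_op gamma ot X in
  let H := fun j => cov_wavelet (h j) Th in
  flatten [seq [seq U (scat_feat H rho p x) | p <- all_paths J l] | l <- iota 0 L].

Definition cst_perm N (Phi : seq 'cV[R]_N) (Pi : 'M[R]_N) : seq 'cV[R]_N :=
  [seq Pi *m b | b <- Phi].

End Defs.

(* Main.v *)
Require Import Defs.
From HB Require Import structures.
From mathcomp Require Import all_boot all_order all_algebra all_fingroup.
From mathcomp Require Import reals.
From Stdlib Require Import ClassicalEpsilon FunctionalExtensionality.
Import Order.TTheory GRing.Theory Num.Theory.
Local Open Scope ring_scope.


Lemma interp (R : fieldType) (h : R -> R) (S : seq R) :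
  exists p : {poly R}, forall x, x \in S -> p.[x] = h x.
Proof.
elim: S => [|a S [p Hp]]; first by exists 0.
case: (boolP (a \in S)) => aS.
  by exists p => x; rewrite inE => /orP[/eqP->|]; auto.
set w := \prod_(s <- S) ('X - s%:P).
have wa : w.[a] != 0 by have := root_prod_XsubC S a; rewrite (negbTE aS) /root => ->.
exists (p + ((h a - p.[a]) / w.[a]) *: w) => x; rewrite inE => /orP[/eqP->|xS].
  by rewrite hornerD hornerZ divfK // addrC subrK.
have : root w x by rewrite root_prod_XsubC.
by move/rootP; rewrite hornerD hornerZ => ->; rewrite mulr0 addr0 Hp.
Qed.

Lemma horner_conj (R : comNzRingType) n (V D : 'M[R]_n.+1) p :
  V^T *m V = 1%:M -> horner_mx (V *m D *m V^T) p = V *m horner_mx D p *m V^T.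
Proof.
move=> HV; have HV' := mulmx1C HV.
elim/poly_ind: p => [|p c IH]; first by rewrite !rmorph0 mulmx0 mul0mx.
rewrite !rmorphD !rmorphM /= !horner_mx_X !horner_mx_C IH -!mulmxE.
rewrite mulmxDr mulmxDl mul_mx_scalar -scalemxAl HV' scalemx1; congr (_ + _).
by rewrite !mulmxA -[V *m _ *m V^T *m V]mulmxA HV mulmx1.
Qed.

Lemma fc_uniq (R: realType) n (h : R->R) (A V1 V2 : 'M[R]_n) d1 d2 :
  is_spec_dec A V1 d1 -> is_spec_dec A V2 d2 ->
  V1 *m diag_mx (map_mx h d1) *m V1^T = V2 *m diag_mx (map_mx h d2) *m V2^T.
Proof.
case: n A V1 V2 d1 d2 => [|n] A V1 V2 d1 d2 [H1 E1] [H2 E2].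
  by apply/matrixP => [[]].
have [p Hp] := @interp _ h ([seq d1 0 i | i <- enum 'I_n.+1] ++ [seq d2 0 i | i <- enum 'I_n.+1]).
have e1 : map_mx h d1 = map_mx (horner p) d1.
  by apply/matrixP => i j; rewrite !mxE (ord1 i) Hp // mem_cat map_f ?mem_enum.
have e2 : map_mx h d2 = map_mx (horner p) d2.
  by apply/matrixP => i j; rewrite !mxE (ord1 i) Hp // mem_cat map_f ?mem_enum ?orbT.
by rewrite e1 e2 -!horner_mx_diag -!horner_conj // -E1 -E2.
Qed.

Lemma pick_orP (A : Type) (d : A) (P : A -> Prop) :
  ((exists x, P x) -> P (pick_or d P)) /\ (~ (exists x, P x) -> pick_or d P = d).
Proof.
rewrite /pick_or; case: excluded_middle_informative => [e|ne]; split => //.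
  by move=> _; case: constructive_indefinite_description.
Qed.

Lemma spec_conj (R : realType) n (Q A V : 'M[R]_n) d :
  Q^T *m Q = 1%:M -> is_spec_dec A V d -> is_spec_dec (Q *m A *m Q^T) (Q *m V) d.
Proof.
move=> HQ [HV ->]; split.
  by rewrite trmx_mul mulmxA -(mulmxA _ Q^T) HQ mulmx1 HV.
by rewrite trmx_mul !mulmxA.
Qed.

Lemma wavelet_conj (R : realType) n (h : R -> R) (Q A : 'M[R]_n) :
  Q^T *m Q = 1%:M ->
  cov_wavelet h (Q *m A *m Q^T) = Q *m cov_wavelet h A *m Q^T.
Proof.
move=> HQ; have HQ' := mulmx1C HQ.
rewrite /cov_wavelet.
set P1 := (fun p : 'M[R]_n * 'rV[R]_n => is_spec_dec (Q *m A *m Q^T) p.1 p.2).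
set P0 := (fun p : 'M[R]_n * 'rV[R]_n => is_spec_dec A p.1 p.2).
have [a1 b1] := @pick_orP _ (0, 0) P1.
have [a0 b0] := @pick_orP _ (0, 0) P0.
case: (excluded_middle_informative (exists x, P0 x)) => [ex|nex].
  have s0 := a0 ex.
  have s1 : P1 (@pick_or _ (0,0) P1).
    apply: a1; exists (Q *m (@pick_or _ (0,0) P0).1, (@pick_or _ (0,0) P0).2).
    exact: (@spec_conj R n Q _ _ _ HQ s0).
  rewrite (@fc_uniq R n h _ _ _ _ _ s1 (@spec_conj R n Q _ _ _ HQ s0)).
  by rewrite trmx_mul !mulmxA.
have nex1 : ~ (exists x, P1 x).
  case=> [[V d] sd]; apply: nex; exists (Q^T *m V, d).
  have := @spec_conj R n Q^T _ _ _ _ sd; rewrite trmxK.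
  have -> : Q^T *m (Q *m A *m Q^T) *m Q = A by rewrite !mulmxA HQ mul1mx -mulmxA HQ mulmx1.
  by apply; rewrite HQ'.
by rewrite b1 // b0 //= !mul0mx !mulmx0 mul0mx.
Qed.

Lemma permTP (R : realType) n (s : 'S_n) : (perm_mx s)^T *m perm_mx s = 1%:M :> 'M[R]_n.
Proof. by rewrite tr_perm_mx -perm_mxM mulVg perm_mx1. Qed.

Lemma cov_conj (R : realType) N T (Q : 'M[R]_N) (X : 'M[R]_(N, T)) :
  sample_cov (Q *m X) = Q *m sample_cov X *m Q^T.
Proof.
rewrite /sample_cov /sample_mean.
have -> : Q *m X - ((T%:R)^-1 *: (Q *m X *m (const_mx 1 : 'M_(T,1)))) *m (const_mx 1 : 'M_(1,T))
   = Q *m (X - ((T%:R)^-1 *: (X *m (const_mx 1 : 'M_(T,1)))) *m (const_mx 1 : 'M_(1,T))).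
  by rewrite mulmxBr -!scalemxAl -!scalemxAr !mulmxA.
rewrite trmx_mul.
set Y := X - _.
by rewrite -scalemxAr -scalemxAl !mulmxA.
Qed.

Lemma largest_eig_conj (R : realType) n (Q A : 'M[R]_n) :
  Q^T *m Q = 1%:M -> largest_eig (Q *m A *m Q^T) = largest_eig A.
Proof.
move=> HQ; have HQ' := mulmx1C HQ.
have E : eigenvalue (Q *m A *m Q^T) = eigenvalue A.
  apply: functional_extensionality => a.
  apply/eigenvalueP/eigenvalueP => [[v Hv nz]|[v Hv nz]].
    exists (v *m Q).
      have := congr1 (mulmx^~ Q) Hv.
      by rewrite /= -!mulmxA HQ mulmx1 -scalemxAl !mulmxA.
    apply: contraNneq nz => e.
    by rewrite -[v]mulmx1 -HQ' mulmxA e mul0mx.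
  exists (v *m Q^T).
    by rewrite !mulmxA -(mulmxA v) HQ mulmx1 Hv -scalemxAl.
  apply: contraNneq nz => e.
  by rewrite -[v]mulmx1 -HQ mulmxA e mul0mx.
by rewrite /largest_eig E.
Qed.

Lemma cov_op_conj (R : realType) N T (Q : 'M[R]_N) (X : 'M[R]_(N, T)) gamma ot :
  Q^T *m Q = 1%:M ->
  cov_op gamma ot (Q *m X) = Q *m cov_op gamma ot X *m Q^T.
Proof.
move=> HQ; have HQ' := mulmx1C HQ.
rewrite /cov_op cov_conj largest_eig_conj //.
move: (sample_cov X) => C; move: (largest_eig C) => w; case: ot.
  by rewrite -!scalemxAr -!scalemxAl.
by rewrite -!scalemxAr -!scalemxAl mulmxBr mulmxBl mulmx1 HQ' -!scalemxAr -!scalemxAl.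
Qed.

Lemma map_perm (R : realType) n (s : 'S_n) (f : R -> R) (y : 'cV[R]_n) :
  map_mx f (perm_mx s *m y) = perm_mx s *m map_mx f y.
Proof. by rewrite -!row_permE; apply/matrixP => i j; rewrite !mxE. Qed.

Lemma scat_conj (R : realType) N J (s : 'S_N) (H H' : 'I_J -> 'M[R]_N) rho p x :
  (forall j, H' j = perm_mx s *m H j *m (perm_mx s)^T) ->
  scat_feat H' rho p (perm_mx s *m x) = perm_mx s *m scat_feat H rho p x.
Proof.
move=> HH; elim: p x => [|j p IH] x //=.
by rewrite HH -!mulmxA (mulmxA _ (perm_mx s)) permTP mul1mx map_perm IH.
Qed.

Lemma cstE (R : realType) N T M J (X : 'M[R]_(N, T)) gamma ot h L rho
  (U : 'cV[R]_N -> 'cV[R]_M) x :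
  cst X gamma ot h L rho U x =
  flatten [seq [seq U (scat_feat (fun j : 'I_J => cov_wavelet (h j) (cov_op gamma ot X)) rho p x)
     | p <- all_paths J l] | l <- iota 0 L].
Proof. by []. Qed.

Lemma map_flat2 (I P C : Type) (f : I -> seq P) (u v : P -> C) (g : C -> C) (s : seq I) :
  (forall p, u p = g (v p)) ->
  flatten [seq [seq u p | p <- f l] | l <- s] = map g (flatten [seq [seq v p | p <- f l] | l <- s]).
Proof.
move=> E; elim: s => //= l s IH; rewrite map_cat IH -map_comp; congr (_ ++ _).
by apply: eq_map => p; rewrite E.
Qed.

Lemma gen_eqv (R : realType) N M J L (H0 H1 : 'I_J -> 'M[R]_N) rho (Q : 'M[R]_N)
  (g : 'cV[R]_M -> 'cV[R]_M) (U : 'cV[R]_N -> 'cV[R]_M) x :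
  (forall p y, scat_feat H1 rho p (Q *m y) = Q *m scat_feat H0 rho p y) ->
  (forall y, U (Q *m y) = g (U y)) ->
  flatten [seq [seq U (scat_feat H1 rho p (Q *m x)) | p <- all_paths J l] | l <- iota 0 L]
  = map g (flatten [seq [seq U (scat_feat H0 rho p x) | p <- all_paths J l] | l <- iota 0 L]).
Proof. by move=> Hs HU; apply: map_flat2 => p; rewrite Hs HU. Qed.

Theorem theorem1 (R : realType) (N T J L : nat) (X : 'M[R]_(N, T))
    (s : 'S_N) (gamma : R) (ot : op_type) (h : 'I_J -> R -> R) (rho : R -> R) :
  0 < gamma ->
  0 < largest_eig (sample_cov X) ->
  (forall (U : 'cV[R]_N -> 'cV[R]_N),
      (forall (s' : 'S_N) (y : 'cV[R]_N), U (perm_mx s' *m y) = perm_mx s' *m U y) ->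
      forall x : 'cV[R]_N,
        cst (perm_mx s *m X) gamma ot h L rho U (perm_mx s *m x)
        = cst_perm (cst X gamma ot h L rho U x) (perm_mx s))
  /\
  (forall (M : nat) (U : 'cV[R]_N -> 'cV[R]_M),
      (forall (s' : 'S_N) (y : 'cV[R]_N), U (perm_mx s' *m y) = U y) ->
      forall x : 'cV[R]_N,
        cst (perm_mx s *m X) gamma ot h L rho U (perm_mx s *m x)
        = cst X gamma ot h L rho U x).
Proof.
move=> _ _.
have HQ := @permTP R N s.
have HH : forall j, cov_wavelet (h j) (cov_op gamma ot (perm_mx s *m X))
   = perm_mx s *m cov_wavelet (h j) (cov_op gamma ot X) *m (perm_mx s)^T.
  by move=> j; rewrite (@cov_op_conj R N T (perm_mx s) X gamma ot HQ) (@wavelet_conj R N (h j) (perm_mx s) _ HQ).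
have Hs := @scat_conj R N J s _ _ rho _ _ HH.
split.
  move=> U HU x; rewrite !cstE /cst_perm.
  exact: (@gen_eqv R N N J L _ _ rho (perm_mx s) _ U x Hs (HU s)).
move=> M U HU x; rewrite !cstE.
rewrite -[RHS]map_id.
exact: (@gen_eqv R N M J L _ _ rho (perm_mx s) id U x Hs (HU s)).
Qed.
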